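(* Let $(X,+)$ be an uncountable abelian Polish group with a complete metric $d$. Let $\mathcal I\subseteq\mathcal P(X)$ be a proper, translation-invariant $\sigma$-ideal containing singletons and having a Borel base, such that for every Borel set $B\notin\mathcal I$ and every family $\mathcal D\subseteq\mathcal I$ with $|\mathcal D|<\mathfrak c$ we have $|B\setminus\bigcup\mathcal D|=\mathfrak c$, and such that there is $a$ in the range of $d$, $a\neq0$, with $\{y\in X:d(x,y)=a\}\in\mathcal I$ for every $x\in X$. If $\kappa$ is a cardinal with $2^\kappa=\mathfrak c$, then there exists a family $\{B_\xi:\xi<\kappa\}$ of pairwise disjoint subsets of $X$ such that (1) every $B_\xi$ is completely $\mathcal I$-nonmeasurable, (2) no $B_\xi$ is a $2$-covering, and (3) $\{B_\xi:\xi<\kappa\}$ is a $\kappa$-S-covering.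
   Context: $\mathfrak c=|\mathbb R|$. A set $N\subseteq X$ is completely $\mathcal I$-nonmeasurable if for every Borel $A\notin\mathcal I$ both $A\cap N\notin\mathcal I$ and $A\setminus N\notin\mathcal I$. A set $A\subseteq X$ is a $2$-covering if for every $C\subseteq X$ with $|C|=2$ there is $x\in X$ with $C+x\subseteq A$. A family $\mathcal A$ of pairwise disjoint subsets of $X$ is a $\kappa$-S-covering if $|\mathcal A|=\kappa$ and for every $F\subseteq X$ with $|F|=\kappa$ there is $t\in X$ such that $F+t\subseteq\bigcup\mathcal A$ and $|(F+t)\cap A|=1$ for all $A\in\mathcal A$. *)

(* Defs.v *)
From HB Require Import structures.
From mathcomp Require Import all_boot all_order all_algebra.
From mathcomp Require Import boolp classical_sets cardinality reals.
Set Implicit Arguments. Unset Strict Implicit. Unset Printing Implicit Defensive.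
Import Order.TTheory GRing.Theory Num.Theory.
Local Open Scope classical_set_scope.
Local Open Scope ring_scope.
Local Open Scope card_scope.

(* The abelian group X is a zmodType; the (complete, compatible) metric d is
   real-valued in an arbitrary realType R; the topology of X is the one
   induced by d.  c = |R| (every realType has the cardinality of the reals). *)

Section Defs.
Variables (R : realType) (X : zmodType) (d : X -> X -> R).

Definition is_metric : Prop :=
  (forall x y, d x y = 0 <-> x = y) /\ (forall x y, d x y = d y x) /\
  (forall x y z, d x z <= d x y + d y z).

Definition d_open (U : set X) : Prop :=
  forall x, U x -> exists e : R, 0 < e /\ [set y | d x y < e] `<=` U.

Definition d_cauchy (u : nat -> X) : Prop :=
  forall e : R, 0 < e -> exists N : nat, forall m n : nat,
    (N <= m)%N -> (N <= n)%N -> d (u m) (u n) < e.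

Definition d_converges (u : nat -> X) : Prop :=
  exists l : X, forall e : R, 0 < e -> exists N : nat, forall n : nat,
    (N <= n)%N -> d (u n) l < e.

Definition d_complete : Prop := forall u, d_cauchy u -> d_converges u.

Definition d_separable : Prop :=
  exists D : set X, countable D /\
    forall x (e : R), 0 < e -> exists y, D y /\ d x y < e.

Definition d_topological_group : Prop :=
  forall x y (e : R), 0 < e -> exists delta : R, 0 < delta /\
    forall x' y', d x x' < delta -> d y y' < delta ->
      d (x - y) (x' - y') < e.

Definition abelian_polish_group_complete_metric : Prop :=
  is_metric /\ d_complete /\ d_separable /\ d_topological_group.

Inductive borel : set X -> Prop :=
  | borel_open U : d_open U -> borel U
  | borel_compl A : borel A -> borel (~` A)
  | borel_cunion (F : nat -> set X) : (forall n, borel (F n)) ->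
      borel (\bigcup_n F n).

End Defs.

Section Ideals.
Variables (X : zmodType).

Definition translate (A : set X) (t : X) : set X := [set a + t | a in A].

Definition sigma_ideal (I : set (set X)) : Prop :=
  (forall A B, I B -> A `<=` B -> I A) /\
  (forall F : nat -> set X, (forall n, I (F n)) -> I (\bigcup_n F n)).

Definition ideal_is_proper (I : set (set X)) : Prop := ~ I setT.

Definition translation_invariant (I : set (set X)) : Prop :=
  forall A t, I A -> I (translate A t).

Definition contains_singletons (I : set (set X)) : Prop :=
  forall x, I [set x].

Definition has_borel_base (B : set X -> Prop) (I : set (set X)) : Prop :=
  forall A, I A -> exists C, B C /\ I C /\ A `<=` C.

Definition completely_nonmeasurable (B : set X -> Prop) (I : set (set X))
  (N : set X) : Prop :=
  forall A, B A -> ~ I A -> ~ I (A `&` N) /\ ~ I (A `\` N).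

Definition two_covering (A : set X) : Prop :=
  forall C : set X, C #= [set: bool] -> exists x, translate C x `<=` A.

Definition pairwise_disjoint_family (F : set (set X)) : Prop :=
  forall A1 A2, F A1 -> F A2 -> A1 <> A2 -> A1 `&` A2 = set0.

(* kappa is represented by the type K *)
Definition kappa_S_covering (K : Type) (F : set (set X)) : Prop :=
  pairwise_disjoint_family F /\ F #= [set: K] /\
  forall E : set X, E #= [set: K] -> exists t : X,
    translate E t `<=` \bigcup_(A in F) A /\
    forall A, F A -> exists x, translate E t `&` A = [set x].

End Ideals.

(* Main.v *)
Require Import Defs.
From HB Require Import structures.
From mathcomp Require Import all_boot all_order all_algebra.
From mathcomp Require Import boolp classical_sets cardinality reals.
From mathcomp Require Import functions wochoice.
From mathcomp Require lra interval.

Module P_H.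
Set Implicit Arguments. Unset Strict Implicit. Unset Printing Implicit Defensive.
Import Order.TTheory GRing.Theory Num.Theory.
Local Open Scope classical_set_scope.
Local Open Scope card_scope.

Lemma ch X Y (P : X -> Y -> Prop) :
  (forall x, exists y, P x y) -> exists f, forall x, P x (f x).
Proof. by move=> /choice [f Hf]; exists f. Qed.

Definition ile T U (A : set T) (B : set U) := exists f : T -> U,
  (forall x, A x -> B (f x)) /\ (forall x y, A x -> A y -> f x = f y -> x = y).

Lemma ile_of_card T U (u0 : U) (A : set T) (B : set U) : A #<= B -> ile A B.
Proof.
move/card_leP=> [g].
exists (fun x => match pselect (A x) with left h => val (g (exist _ x (mem_set h))) | right _ => u0 end).
split.
- move=> x Ax; case: pselect => // h; exact: set_mem (valP _).
- move=> x y Ax Ay; case: pselect => // hx; case: pselect => // hy.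
  move/val_inj => /(@inj _ _ _ g) E.
  have := E (mem_set I) (mem_set I). by case.
Qed.

Lemma card_of_ile T U (A : set T) (B : set U) : ile A B -> A #<= B.
Proof.
move=> [f [fAB finj]].
have [h] : $|{injfun A >-> B}| by apply/injfunPex; exists f => // x y /set_mem Ax /set_mem Ay; exact: finj.
exact: inj_card_le h.
Qed.

Lemma bij_of_card T U (u0 : U) (A : set T) (B : set U) : A #= B ->
  exists f : T -> U, (forall x, A x -> B (f x)) /\
    (forall x y, A x -> A y -> f x = f y -> x = y) /\
    (forall y, B y -> exists2 x, A x & f x = y).
Proof.
move/card_bijP=> [g [g' gK g'K]].
exists (fun x => match pselect (A x) with left h => val (g (exist _ x (mem_set h))) | right _ => u0 end).
split; [|split].
- move=> x Ax; case: pselect => // h; exact: set_mem (valP _).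
- move=> x y Ax Ay; case: pselect => // hx; case: pselect => // hy.
  move/val_inj => /(can_inj gK). by case.
- move=> y By; pose b : B := exist _ y (mem_set By).
  exists (val (g' b)); first exact: set_mem (valP _).
  case: pselect => h; last by exfalso; apply: h; exact: set_mem (valP _).
  have -> : exist _ (val (g' b)) (mem_set h) = g' b by apply: val_inj.
  by rewrite g'K.
Qed.

Lemma card_of_ile2 T U (A : set T) (B : set U) : ile A B -> ile B A -> A #= B.
Proof. by move=> h1 h2; apply: Cantor_Bernstein; apply: card_of_ile. Qed.

Lemma ile_refl T (A : set T) : ile A A.
Proof. by exists id. Qed.

Lemma ile_trans T U V (A : set T) (B : set U) (C : set V) : ile A B -> ile B C -> ile A C.
Proof.
move=> [f [f1 f2]] [g [g1 g2]]; exists (g \o f); split=> [x Ax|x y Ax Ay /= e].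
  exact/g1/f1.
by apply: f2 => //; apply: g2 => //; apply: f1.
Qed.

Lemma ile_sub T (A B : set T) : A `<=` B -> ile A B.
Proof. by move=> AB; exists id; split=> // x /AB. Qed.

Lemma ile_image T U (t0 : T) (f : T -> U) (A : set T) : ile (f @` A) A.
Proof.
have [g Hg] : exists g : U -> T, forall y, (f @` A) y -> A (g y) /\ f (g y) = y.
  apply: (@ch _ _ (fun y x => (f @` A) y -> A x /\ f x = y)) => y.
  case: (pselect ((f @` A) y)) => [[x Ax fx]|h]; first by exists x.
  by exists t0.
exists g; split=> [y /Hg []//|y y' /Hg [_ e1] /Hg [_ e2] e].
by move: e1 e2; rewrite e => -> ->.
Qed.

Lemma ileX T1 T2 U1 U2 (A1 : set T1) (A2 : set T2) (B1 : set U1) (B2 : set U2) :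
  ile A1 B1 -> ile A2 B2 -> ile (A1 `*` A2) (B1 `*` B2).
Proof.
move=> [f [f1 f2]] [g [g1 g2]]; exists (fun p => (f p.1, g p.2)); split.
  by move=> [x y] [/= ? ?]; split; [apply: f1|apply: g1].
move=> [x y] [x' y'] [/= Ax Ay] [/= Ax' Ay'] [e1 e2].
by rewrite (f2 _ _ Ax Ax' e1) (g2 _ _ Ay Ay' e2).
Qed.

Lemma cantor T (A : set T) : ~ ile [set: set T] A.
Proof.
case=> f [_ finj].
pose D := [set k | exists S, f S = k /\ ~ S k].
have [DfD|nDfD] := pselect (D (f D)).
  have [S [e nS]] := DfD.
  by move: nS; rewrite (finj S D I I e).
by apply: (nDfD); exists D; split.
Qed.

End P_H.
Import P_H.

Module P_C.
Set Implicit Arguments. Unset Strict Implicit. Unset Printing Implicit Defensive.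
Local Open Scope classical_set_scope.

Lemma ile_total T U (t0 : T) (u0 : U) (A : set T) (B : set U) : ile A B \/ ile B A.
Proof.
pose P := [set G : set (T * U) | (forall p, G p -> A p.1 /\ B p.2) /\
  (forall x y y', G (x,y) -> G (x,y') -> y = y') /\
  (forall x x' y, G (x,y) -> G (x',y) -> x = x')].
have [G [[GAB [Gf Gi]] Gmax]] : exists G, P G /\ forall G', G `<` G' -> ~ P G'.
  apply: Zorn_bigcup => F FP Ftot; split; [|split].
  - by move=> p [G FG Gp]; exact: (FP G FG).1 p Gp.
  - move=> x y y' [G1 F1 h1] [G2 F2 h2]; case: (Ftot G1 G2 F1 F2) => s.
      exact: (FP G2 F2).2.1 x _ _ (s _ h1) h2.
    exact: (FP G1 F1).2.1 x _ _ h1 (s _ h2).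
  - move=> x x' y [G1 F1 h1] [G2 F2 h2]; case: (Ftot G1 G2 F1 F2) => s.
      exact: (FP G2 F2).2.2 _ _ y (s _ h1) h2.
    exact: (FP G1 F1).2.2 _ _ y h1 (s _ h2).
have [tot|ntot] := pselect (forall x, A x -> exists y, G (x,y)).
  left; have [f Hf] : exists f : T -> U, forall x, A x -> G (x, f x).
    apply: (@ch _ _ (fun x y => A x -> G (x, y))) => x.
    have [Ax|nAx] := pselect (A x); last by exists u0.
    by have [y Gy] := tot x Ax; exists y.
  exists f; split=> [x /Hf /GAB []//|x x' /Hf h1 /Hf h2 e].
  by rewrite -e in h2; exact: Gi h1 h2.
have [sur|nsur] := pselect (forall y, B y -> exists x, G (x,y)).
  right; have [f Hf] : exists f : U -> T, forall y, B y -> G (f y, y).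
    apply: (@ch _ _ (fun y x => B y -> G (x, y))) => y.
    have [By|nBy] := pselect (B y); last by exists t0.
    by have [x Gx] := sur y By; exists x.
  exists f; split=> [y /Hf /GAB []//|y y' /Hf h1 /Hf h2 e].
  by rewrite -e in h2; exact: Gf h1 h2.
have [a [Aa na]] : exists a, A a /\ ~ exists y, G (a, y).
  apply: contra_notP ntot => h x Ax; apply: contra_notP h => nx; by exists x.
have [b [Bb nb]] : exists b, B b /\ ~ exists x, G (x, b).
  apply: contra_notP nsur => h y By; apply: contra_notP h => ny; by exists y.
exfalso; apply: (Gmax (G `|` [set (a, b)])).
  split; first by move=> p Gp; left.
  by move=> /(_ (a, b) (or_intror erefl)) Gab; apply: na; exists b.
split; [|split].
- by move=> p [/GAB //|->].
- move=> x y y' [h1|h1] [h2|h2]; first exact: Gf h1 h2.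
  + by case: h2 => ??; subst; exfalso; apply: na; exists y.
  + by case: h1 => ??; subst; exfalso; apply: na; exists y'.
  + by case: h1 => ??; case: h2 => ??; subst.
- move=> x x' y [h1|h1] [h2|h2]; first exact: Gi h1 h2.
  + by case: h2 => ??; subst; exfalso; apply: nb; exists x.
  + by case: h1 => ??; subst; exfalso; apply: nb; exists x'.
  + by case: h1 => ??; case: h2 => ??; subst.
Qed.

End P_C.
Import P_C.

Module P_Hs.
Set Implicit Arguments. Unset Strict Implicit. Unset Printing Implicit Defensive.
Local Open Scope classical_set_scope.

Definition gdom T U (G : set (T * U)) := [set a | exists y, G (a, y)].

Definition hessP T (A : set T) (G0 : set (T * (T * T))) (G : set (T * (T * T))) :=
  [/\ (forall x y y', G (x,y) -> G (x,y') -> y = y'),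
      (forall x x' y, G (x,y) -> G (x',y) -> x = x'),
      (forall x y, G (x,y) -> A x),
      (forall y, (exists x, G (x,y)) <-> (gdom G y.1 /\ gdom G y.2)) &
      (G = set0 \/ G0 `<=` G)].

Lemma hessP_chain T (A : set T) G0 (F : set (set (T * (T * T)))) :
  F `<=` hessP A G0 -> total_on F subset -> hessP A G0 (\bigcup_(X in F) X).
Proof.
move=> FP Ftot; split.
- move=> x y y' [G1 F1 h1] [G2 F2 h2]; case: (Ftot G1 G2 F1 F2) => s.
    by case: (FP G2 F2) => Gf _ _ _ _; exact: Gf (s _ h1) h2.
  by case: (FP G1 F1) => Gf _ _ _ _; exact: Gf h1 (s _ h2).
- move=> x x' y [G1 F1 h1] [G2 F2 h2]; case: (Ftot G1 G2 F1 F2) => s.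
    by case: (FP G2 F2) => _ Gi _ _ _; exact: Gi (s _ h1) h2.
  by case: (FP G1 F1) => _ Gi _ _ _; exact: Gi h1 (s _ h2).
- by move=> x y [G1 F1 h1]; case: (FP G1 F1) => _ _ GA _ _; exact: GA h1.
- move=> [a b]; split.
    move=> [x [G1 F1 h1]]; case: (FP G1 F1) => _ _ _ Gr _.
    have [[y1 h1'] [y2 h2']] := (Gr (a, b)).1 (ex_intro _ x h1).
    by split; [exists y1|exists y2]; exists G1.
  move=> [[y1 [G1 F1 h1]] [y2 [G2 F2 h2]]] /=.
  have [G [FG [s1 s2]]] : exists G, F G /\ G1 `<=` G /\ G2 `<=` G.
    by case: (Ftot G1 G2 F1 F2) => s; [exists G2; split=> //; split|exists G1; split=> //; split].
  case: (FP G FG) => _ _ _ Gr _.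
  have [x hx] := (Gr (a, b)).2 (conj (ex_intro _ y1 (s1 _ h1)) (ex_intro _ y2 (s2 _ h2))).
  by exists x; exists G.
- have [[G FG Gn]|] := pselect (exists2 G, F G & G !=set0).
    case: (FP G FG) => _ _ _ _ [G0e|sG0]; first by move: Gn; rewrite G0e => -[].
    by right=> p /sG0 Gp; exists G.
  move=> h; left; apply/seteqP; split=> // p [G FG Gp]; exfalso.
  by apply: h; exists G => //; exists p.
Qed.

Lemma ile_setT_nat2 : exists pi : nat -> nat * nat, (forall n m, pi n = pi m -> n = m) /\
  (forall p, exists n, pi n = p).
Proof.
have := card_nat2; rewrite card_eq_sym => /(bij_of_card (0,0)%N) [pi [_ [pinj pisurj]]].
exists pi; split=> [n m|p]; first exact: pinj.
by have [n _ <-] := pisurj p I; exists n.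
Qed.

Lemma hess T (A : set T) : ile [set: nat] A -> ile (A `*` A) A.
Proof.
move=> [i [iA iinj]].
have {}iinj : forall n m, i n = i m -> n = m by move=> n m; apply: iinj.
have [pi [piinj pisurj]] := ile_setT_nat2.
pose G0 : set (T * (T * T)) := [set p | exists n, p = (i n, (i (pi n).1, i (pi n).2))].
have PG0 : hessP A G0 G0.
  split.
  - move=> x y y' [n [-> ->]] [m [e ->]].
    by rewrite (iinj _ _ e).
  - move=> x x' y [n [-> ->]] [m [-> [e1 e2]]].
    have e : pi n = pi m by move: (pi n) (pi m) (iinj _ _ e1) (iinj _ _ e2) => [??][??]/= -> ->.
    by rewrite (piinj _ _ e).
  - by move=> x y [n [-> _]]; apply: iA.
  - move=> [a b]; split.
      move=> [x [n [_ [-> ->]]]]; split.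
        by exists (i (pi (pi n).1).1, i (pi (pi n).1).2); exists (pi n).1.
      by exists (i (pi (pi n).2).1, i (pi (pi n).2).2); exists (pi n).2.
    move=> [[y1 [n [-> _]]] [y2 [m [-> _]]]] /=.
    have [k hk] := pisurj (n, m).
    by exists (i k); exists k; rewrite hk.
  - by right.
have [G [[Gf Gi GA Gr G0G] Gmax]] : exists G, hessP A G0 G /\ forall G', G `<` G' -> ~ hessP A G0 G'.
  by apply: Zorn_bigcup => F FP Ftot; exact: hessP_chain.
have {}G0G : G0 `<=` G.
  case: G0G => // G0e; exfalso; apply: (Gmax G0) => //; rewrite G0e; split=> //.
  move=> /(_ (i 0%N, (i (pi 0%N).1, i (pi 0%N).2))) h.
  by have := h (ex_intro _ 0%N erefl).
set M := gdom G.
have MA : M `<=` A by move=> x [y /GA].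
have iM : forall n, M (i n) by move=> n; exists (i (pi n).1, i (pi n).2); apply: G0G; exists n.
have MMM : ile (M `*` M) M.
  have [einv He] : exists einv : T * T -> T, forall y, (M `*` M) y -> G (einv y, y).
    apply: (@ch _ _ (fun y x => (M `*` M) y -> G (x, y))) => y.
    have [hy|hy] := pselect ((M `*` M) y); last by exists (i 0%N).
    by have [x hx] := (Gr y).2 hy; exists x.
  exists einv; split=> [y /He hy|y y' /He h1 /He h2 e]; first by exists y.
  by rewrite -e in h2; exact: Gf h1 h2.
have i01 : i 0%N <> i 1%N by move/iinj.
have i02 : i 0%N <> i 2%N by move/iinj.
have i12 : i 1%N <> i 2%N by move/iinj.
case: (ile_total (i 0%N) (i 0%N) (A `\` M) M) => [[f [fM finj]]|[f [fN finj]]].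
  have AM : ile A M.
    apply: ile_trans MMM.
    exists (fun x => if pselect (M x) then (x, i 0%N) else (f x, i 1%N)); split.
      by move=> x Ax; case: pselect => Mx; split=> /=; first [done | apply: iM | apply: fM].
    move=> x y Ax Ay; case: pselect => Mx; case: pselect => My  e; have e1 := f_equal fst e; have e2 := f_equal snd e; rewrite /= in e1 e2; first by [].
    - by case: (i01 e2).
    - by case: (i01 (esym e2)).
    - by apply: finj e1.
  apply: ile_trans (ile_trans MMM (ile_sub MA)).
  exact: ileX.
exfalso.
pose N := f @` M.
have NA : forall x, N x -> A x /\ ~ M x by move=> _ [x Mx <-]; case: (fN x Mx).
have NM : forall x, N x -> ~ M x by move=> x /NA [].
have [finv Hfinv] : exists finv : T -> T, forall y, N y -> M (finv y) /\ f (finv y) = y.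
  apply: (@ch _ _ (fun y x => N y -> M x /\ f x = y)) => y.
  have [[x Mx fx]|ny] := pselect (N y); first by exists x.
  by exists (i 0%N).
pose U3 := [set p : T * T | (M p.1 /\ N p.2) \/ (N p.1 /\ M p.2) \/ (N p.1 /\ N p.2)].
have U3N : ile U3 N.
  apply: (@ile_trans _ _ _ _ ((M `*` M) `*` M)); last first.
    apply: ile_trans (ileX MMM (ile_refl M)) (ile_trans MMM _).
    exists f; split=> [x Mx|x y Mx My]; first by exists x.
    exact: finj.
  exists (fun p => if pselect (M p.1) then ((p.1, finv p.2), i 0%N)
    else if pselect (M p.2) then ((finv p.1, p.2), i 1%N)
    else ((finv p.1, finv p.2), i 2%N)); split.
    move=> [a b] /= h; case: pselect => /= Ma.
      case: h => [[_ Nb]|[[Na _]|[Na _]]]; last 2 first.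
        by case: (NA _ Na).
        by case: (NA _ Na).
      by split; [split => //; case: (Hfinv _ Nb) | apply: iM].
    case: pselect => /= Mb.
      case: h => [[Ma' _]|[[Na _]|[_ Nb]]] //; last by case: (NA _ Nb).
      by split; [split => //; case: (Hfinv _ Na) | apply: iM].
    case: h => [[Ma' _]|[[_ Mb']|[Na Nb]]] //.
    by split; [split; [case: (Hfinv _ Na)|case: (Hfinv _ Nb)] | apply: iM].
  have finvinj : forall x y, N x -> N y -> finv x = finv y -> x = y.
    by move=> x y /Hfinv [_ e1] /Hfinv [_ e2] e; rewrite -e1 -e2 e.
  have U3a : forall a b, U3 (a, b) -> ~ M a -> N a.
    by move=> a b [[]|[[]|[]]].
  have U3b : forall a b, U3 (a, b) -> ~ M b -> N b.
    by move=> a b [[]|[[]|[]]].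
  have U3c : forall a b, U3 (a, b) -> M a -> N b.
    by move=> a b [[]|[[/NM]|[/NM]]].
  move=> [a b] [a' b'] /= h h'.
  case: (pselect (M a)) => Ma; case: (pselect (M a')) => Ma';
  case: (pselect (M b)) => Mb; case: (pselect (M b')) => Mb';
    move=> e; have e1 := f_equal fst e; have e2 := f_equal snd e; rewrite /= in e1 e2;
    have ea := f_equal fst e1; have eb := f_equal snd e1; rewrite /= in ea eb;
    first [ by case: (i01 e2) | by case: (i01 (esym e2)) | by case: (i02 e2)
          | by case: (i02 (esym e2)) | by case: (i12 e2) | by case: (i12 (esym e2))
          | by rewrite ea (finvinj _ _ (U3c _ _ h Ma) (U3c _ _ h' Ma') eb)
          | by rewrite eb (finvinj _ _ (U3a _ _ h Ma) (U3a _ _ h' Ma') ea)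
          | by rewrite (finvinj _ _ (U3a _ _ h Ma) (U3a _ _ h' Ma') ea)
               (finvinj _ _ (U3b _ _ h Mb) (U3b _ _ h' Mb') eb) ].
have NU3 : ile N U3.
  exists (fun n => (n, n)); split=> [n Nn|n m _ _ [] //]; by right; right.
have [g [gU3 [ginj gsurj]]] := bij_of_card (i 0%N, i 0%N) (card_of_ile2 NU3 U3N).
pose G' := G `|` [set p | N p.1 /\ p.2 = g p.1].
have domG' : forall z, gdom G' z <-> M z \/ N z.
  move=> z; split.
    by move=> [y [h|[/= Nz _]]]; [left; exists y|right].
  by move=> [[y h]|Nz]; [exists y; left|exists (g z); right].
have MN : forall z, M z -> N z -> False by move=> z Mz /NM.
apply: (Gmax G'); last split.
- split; first by move=> p Gp; left.
  move=> /(_ (f (i 0%N), g (f (i 0%N)))) h.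
  have Nf : N (f (i 0%N)) by exists (i 0%N).
  have Gn := h (or_intror (conj Nf erefl)).
  by apply: MN Nf; exists (g (f (i 0%N))).
- move=> x y y' [h1|[/= Nx e1]] [h2|[/= Nx' e2]].
  + exact: Gf h1 h2.
  + by case: (MN x) => //; exists y.
  + by case: (MN x) => //; exists y'.
  + by rewrite e1 e2.
- move=> x x' y H1 H2; case: H1 => [h1|[/= Nx e1]]; case: H2 => [h2|[/= Nx' e2]].
  + exact: Gi h1 h2.
  + have [[y1 h1'] [y2 h2']] := (Gr y).1 (ex_intro _ x h1).
    have := gU3 _ Nx'; rewrite -e2; case=> [[_ Nb]|[[Na _]|[Na _]]]; exfalso;
      [by apply: (NM _ Nb); exists y2|by apply: (NM _ Na); exists y1|by apply: (NM _ Na); exists y1].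
  + have [[y1 h1'] [y2 h2']] := (Gr y).1 (ex_intro _ x' h2).
    have := gU3 _ Nx; rewrite -e1; case=> [[_ Nb]|[[Na _]|[Na _]]]; exfalso;
      [by apply: (NM _ Nb); exists y2|by apply: (NM _ Na); exists y1|by apply: (NM _ Na); exists y1].
  + by apply: ginj => //; rewrite -e1 -e2.
- by move=> x y [/GA|[/= /NA []]].
- move=> y; rewrite !domG'; split.
    move=> [x [h|[/= Nx ->]]].
      by have [] := (Gr y).1 (ex_intro _ x h); split; left.
    by case: (gU3 _ Nx) => [[? ?]|[[? ?]|[? ?]]]; split; by [left|right].
  move=> [h1 h2].
  have [[My1 My2]|nMM] := pselect (M y.1 /\ M y.2).
    by have [x hx] := (Gr y).2 (conj My1 My2); exists x; left.
  have : U3 y.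
    case: h1 => h1; case: h2 => h2.
    - by case: nMM.
    - by left.
    - by right; left.
    - by right; right.
  by move=> /gsurj [x Nx gx]; exists x; right; split.
- by right => p /G0G; left.
Qed.

End P_Hs.
Import P_Hs.

Module P_Sm.
Set Implicit Arguments. Unset Strict Implicit. Unset Printing Implicit Defensive.
Local Open Scope classical_set_scope.
Local Open Scope card_scope.

Lemma fin_of_nile T (A : set T) : ~ ile [set: nat] A -> finite_set A.
Proof.
move=> h; apply: contrapT => hA.
have [a _] := infinite_setN0 hA.
by move/infiniteP: hA => /(ile_of_card a).
Qed.

Lemma nile_of_fin T (A : set T) : finite_set A -> ~ ile [set: nat] A.
Proof.
by move=> fA /card_of_ile /infiniteP.
Qed.

Lemma small_prod T U V (Big : set V) (A : set T) (B : set U) (t0 : T) (u0 : U) :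
  ile [set: nat] Big -> ~ ile Big A -> ~ ile Big B -> ~ ile Big (A `*` B).
Proof.
move=> nB sA sB h.
have nAB := ile_trans nB h.
case: (ile_total t0 u0 A B) => [AB|BA].
  have [iB|niB] := pselect (ile [set: nat] B).
    by apply: sB; apply: ile_trans h (ile_trans (ileX AB (ile_refl B)) (hess iB)).
  have fB := fin_of_nile niB.
  have fA := card_le_finite (card_of_ile AB) fB.
  exact: nile_of_fin (finite_setX fA fB) nAB.
have [iA|niA] := pselect (ile [set: nat] A).
  by apply: sA; apply: ile_trans h (ile_trans (ileX (ile_refl A) BA) (hess iA)).
have fA := fin_of_nile niA.
have fB := card_le_finite (card_of_ile BA) fA.
exact: nile_of_fin (finite_setX fA fB) nAB.
Qed.

Lemma small_fin T V (Big : set V) (A : set T) :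
  ile [set: nat] Big -> finite_set A -> ~ ile Big A.
Proof. by move=> nB fA h; exact: nile_of_fin fA (ile_trans nB h). Qed.

End P_Sm.
Import P_Sm.

Module P_WO.
Set Implicit Arguments. Unset Strict Implicit. Unset Printing Implicit Defensive.
Local Open Scope classical_set_scope.

Lemma wo_exists (T : eqType) : exists r : T -> T -> Prop,
  [/\ (forall x, r x x), (forall x y, r x y -> r y x -> x = y),
      (forall x y z, r x y -> r y z -> r x z), (forall x y, r x y \/ r y x) &
      (forall S : set T, S !=set0 -> exists z, S z /\ forall x, S x -> r z x)].
Proof.
have [r wor] := well_ordering_principle T.
have wmin : forall S : set T, S !=set0 -> exists z, S z /\ forall x, S x -> r z x.
  move=> S [x Sx].
  have [|z [[zA lb] _]] := wor [pred y | `[< S y >]].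
    by exists x; rewrite unfold_in /=; apply/asboolP.
  exists z; split; first by move: zA; rewrite unfold_in /= => /asboolP.
  by move=> y Sy; apply: lb; rewrite unfold_in /=; apply/asboolP.
have wuniq : forall (S : set T) z z', (S z /\ forall x, S x -> r z x) ->
    (S z' /\ forall x, S x -> r z' x) -> z = z'.
  move=> S z z' [Sz lz] [Sz' lz'].
  have [|w [_ uw]] := wor [pred y | `[< S y >]].
    by exists z; rewrite unfold_in /=; apply/asboolP.
  rewrite -(uw z) ?(uw z') //.
    split; first by rewrite unfold_in /=; apply/asboolP.
    by move=> y; rewrite unfold_in /= => /asboolP /lz'.
  split; first by rewrite unfold_in /=; apply/asboolP.
  by move=> y; rewrite unfold_in /= => /asboolP /lz.
have refl : forall x, r x x.
  move=> x; have [|z [Sz lz]] := wmin [set x]; first by exists x.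
  have e : z = x := Sz.
  by move: lz; rewrite e => /(_ x erefl).
have anti : forall x y, r x y -> r y x -> x = y.
  move=> x y xy yx; apply: (wuniq [set x; y]).
    by split; rewrite /setU /set1 /=; [left|move=> w [->|->]].
  by split; rewrite /setU /set1 /=; [right|move=> w [->|->]].
have tot : forall x y, r x y \/ r y x.
  move=> x y; have [|z [Sz lz]] := wmin [set x; y]; first by exists x; rewrite /setU /set1 /=; left.
  move: Sz lz; rewrite /setU /set1 /= => -[] -> lz; [left|right]; apply: lz;
    rewrite /setU /set1 /=; by [right|left].
exists (fun x y => r x y); split => //.
move=> x y z xy yz.
have [|w [Sw lw]] := wmin [set x; y; z]; first by exists x; rewrite /setU /set1 /=; left; left.
move: Sw lw; rewrite /setU /set1 /= => -[[->|->]|->] lw.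
- by apply: lw; rewrite /setU /set1 /=; right.
- by rewrite (anti x y xy (lw x ltac:(rewrite /setU /set1 /=; left; left))).
- have zy : r z y by apply: lw; rewrite /setU /set1 /=; left; right.
  by rewrite -(anti y z yz zy).
Qed.

End P_WO.
Import P_WO.

Module P_TR.
Set Implicit Arguments. Unset Strict Implicit. Unset Printing Implicit Defensive.
Local Open Scope classical_set_scope.

Definition hist I V (lt : I -> I -> Prop) (G : set (I * V)) (a : I) :=
  [set p | G p /\ lt p.1 a].

Definition functional I V (G : set (I * V)) :=
  forall x y y', G (x, y) -> G (x, y') -> y = y'.

Lemma transfinite I V (lt : I -> I -> Prop) (W : set I)
  (step : I -> set (I * V) -> V -> Prop) :
  (forall x, ~ lt x x) -> (forall x y z, lt x y -> lt y z -> lt x z) ->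
  (forall x y, lt x y \/ x = y \/ lt y x) ->
  (forall S : set I, S !=set0 -> exists z, S z /\ forall x, S x -> ~ lt x z) ->
  (forall a b, W a -> lt b a -> W b) ->
  (forall a (H : set (I * V)), W a -> functional H -> gdom H = [set b | lt b a] ->
     (forall b v, H (b, v) -> step b (hist lt H b) v) -> exists v, step a H v) ->
  exists G : set (I * V), [/\ functional G, gdom G = W &
     forall a v, G (a, v) -> step a (hist lt G a) v].
Proof.
move=> irr tr tri wf Wd ext.
pose P := [set G : set (I * V) | [/\ functional G, gdom G `<=` W,
  (forall a b, gdom G a -> lt b a -> gdom G b) &
  forall a v, G (a, v) -> step a (hist lt G a) v]].
have [G [[Gf GW Gd Gs] Gmax]] : exists G, P G /\ forall G', G `<` G' -> ~ P G'.
  apply: Zorn_bigcup => F FP Ftot.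
  have hU : forall G1, F G1 -> forall a, gdom G1 a ->
      hist lt (\bigcup_(X in F) X) a = hist lt G1 a.
    move=> G1 F1 a da; apply/seteqP; split; last first.
      by move=> p [h1 h2]; split=> //; exists G1.
    move=> [b w] [[G2 F2 h2] /= lba]; split=> //=.
    case: (Ftot G1 G2 F1 F2) => s; last exact: s.
    case: (FP G1 F1) => G1f _ G1d _.
    have [w' hw'] := G1d a b da lba.
    case: (FP G2 F2) => G2f _ _ _.
    by rewrite (G2f _ _ _ h2 (s _ hw')).
  split.
  - move=> x y y' [G1 F1 h1] [G2 F2 h2]; case: (Ftot G1 G2 F1 F2) => s.
      by case: (FP G2 F2) => G2f _ _ _; exact: G2f (s _ h1) h2.
    by case: (FP G1 F1) => G1f _ _ _; exact: G1f h1 (s _ h2).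
  - by move=> a [y [G1 F1 h1]]; case: (FP G1 F1) => _ G1W _ _; apply: G1W; exists y.
  - move=> a b [y [G1 F1 h1]] lba; case: (FP G1 F1) => _ _ G1d _.
    have [w hw] := G1d a b (ex_intro _ y h1) lba.
    by exists w; exists G1.
  - move=> a v [G1 F1 h1]; rewrite (hU G1 F1 a (ex_intro _ v h1)).
    by case: (FP G1 F1) => _ _ _ G1s; apply: G1s.
exists G; split=> //.
apply/seteqP; split=> // a0 Wa0; apply: contrapT => na0.
have [a [[Wa na] amin]] := wf [set x | W x /\ ~ gdom G x] (ex_intro _ a0 (conj Wa0 na0)).
have domG : gdom G = [set b | lt b a].
  apply/seteqP; split=> b.
    move=> db; case: (tri b a) => [//|[eba|lab]]; first by rewrite eba in db.
    by exfalso; apply: na; apply: Gd db lab.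
  move=> lba; apply: contrapT => nb.
  by apply: (amin b) => //; split => //; apply: Wd lba.
have hG : hist lt G a = G.
  apply/seteqP; split=> [p []//|[b w] h]; split=> //=.
  by rewrite -[lt b a]/([set b | lt b a] b) -domG; exists w.
have [v sv] := ext a G Wa Gf domG Gs.
pose G' := G `|` [set (a, v)].
apply: (Gmax G').
  split; first by move=> p h; left.
  by move=> /(_ (a, v) (or_intror erefl)) h; apply: na; exists v.
have dG' : forall b, gdom G' b -> gdom G b \/ b = a.
  by move=> b [w [h|[-> _]]]; [left; exists w|right].
split.
- move=> x y y' [h1|h1] [h2|h2].
  + exact: Gf h1 h2.
  + by case: h2 => ex ey; rewrite ex in h1; exfalso; apply: na; exists y.
  + by case: h1 => ex ey; rewrite ex in h2; exfalso; apply: na; exists y'.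
  + by case: h1 => _ ->; case: h2 => _ ->.
- by move=> b /dG' [/GW //|->].
- move=> b c /dG' [db|->] lcb.
    by have [w hw] := Gd b c db lcb; exists w; left.
  by move: lcb; rewrite -[lt c a]/([set b | lt b a] c) -domG => -[w hw]; exists w; left.
- have hh : forall b, gdom G b -> hist lt G' b = hist lt G b.
    move=> b db; apply/seteqP; split; last by move=> p [h1 h2]; split=> //; left.
    move=> [c w] [[h|[-> _]] /= lcb]; first by split.
    exfalso; move: db; rewrite domG /= => lba.
    by apply: (irr a); apply: tr lcb lba.
  move=> b w [h|[-> ->]].
    by rewrite hh; [apply: Gs | exists w].
  have -> : hist lt G' a = hist lt G a.
    apply/seteqP; split; last by move=> p [h1 h2]; split=> //; left.
    move=> [c w'] [[h|[ec _]] /= lca]; first by split.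
    by rewrite ec in lca; case: (irr a).
  by rewrite hG.
Qed.

End P_TR.
Import P_TR.

Module P_St.
Set Implicit Arguments. Unset Strict Implicit. Unset Printing Implicit Defensive.
Import GRing.Theory.
Local Open Scope classical_set_scope.
Local Open Scope ring_scope.
Local Open Scope card_scope.

Definition Qset (X : zmodType) (h : X) (P : set X) : set X :=
  [set x | P x \/ P (x - h) \/ P (x + h)].

Definition prev (X : zmodType) (A K : Type) (H : set (A * (K -> X))) : set X :=
  [set x | exists p, H p /\ exists k, x = p.2 k].

Definition stepP (R : realType) (X : zmodType) (K : Type) (borelP : set X -> Prop)
  (I : set (set X)) (j : bool * set X -> R) (h : X) (a : R)
  (H : set (R * (K -> X))) (g : K -> X) : Prop :=
  [/\ (forall k k', g k = g k' -> k = k'),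
      (forall k, ~ Qset h (prev H) (g k)),
      (forall A, borelP A -> ~ I A -> j (true, A) = a -> forall k, A (g k)) &
      (forall E, E #= [set: K] -> j (false, E) = a -> exists t, range g = translate E t)].

Lemma Qset_small (R : realType) (X : zmodType) (K : Type) (h : X) (P : set X)
    (S : set (R * K)) (F : R * K -> X) :
  P `<=` F @` S -> Qset h P `<=`
   (fun p : (R * K) * option bool => match p.2 with None => F p.1
      | Some true => F p.1 + h | Some false => F p.1 - h end) @` (S `*` [set: option bool]).
Proof.
move=> PS x [/PS [s Ss <-]|[/PS [s Ss e]|/PS [s Ss e]]].
- by exists (s, None).
- by exists (s, Some true) => //=; rewrite e subrK.
- by exists (s, Some false) => //=; rewrite e addrK.
Qed.

Lemma step_exists (R : realType) (X : zmodType) (K : Type) (borelP : set X -> Prop)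
  (I : set (set X)) (j : bool * set X -> R) (h : X) (a : R)
  (H : set (R * (K -> X))) (k0 : K)
  (Hbig : forall B (D : set (set X)), borelP B -> ~ I B -> D `<=` I ->
     D #<= [set: R] -> ~ ([set: R] #<= D) -> (B `\` \bigcup_(A in D) A) #= [set: R])
  (Isingle : forall x, I [set x])
  (BT : borelP setT) (IT : ~ I setT)
  (nR : ile [set: nat] [set: R])
  (KR : ile [set: K] [set: R])
  (Ksmall : ~ ile [set: R] [set: K])
  (jBE : forall A E, borelP A -> ~ I A -> E #= [set: K] -> j (true, A) <> j (false, E))
  (jB : forall A A', borelP A -> ~ I A -> borelP A' -> ~ I A' ->
     j (true, A) = j (true, A') -> A = A')
  (jE : forall E E', E #= [set: K] -> E' #= [set: K] -> j (false, E) = j (false, E') -> E = E')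
  (S : set (R * K)) (F : R * K -> X)
  (PS : prev H `<=` F @` S) (Ssmall : ~ ile [set: R] S) (SR : ile S [set: R]) :
  exists g, stepP borelP I j h a H g.
Proof.
set Q := Qset h (prev H).
pose F3 := (fun p : (R * K) * option bool => match p.2 with None => F p.1
      | Some true => F p.1 + h | Some false => F p.1 - h end).
pose S3 := S `*` [set: option bool].
have QS3 : Q `<=` F3 @` S3 by apply: Qset_small.
have obR : ile [set: option bool] [set: R].
  apply: ile_trans nR; exists pickle; split=> // x y _ _; exact: (pcan_inj pickleK_inv).
have S3small : ~ ile [set: R] S3.
  apply: (small_prod (0, k0) None nR Ssmall).
  exact: small_fin nR finite_finset.
have RR := hess nR.
have S3R : ile S3 [set: R].
  apply: ile_trans (ileX SR obR) (ile_trans _ RR).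
  by exists id; split.
have QR : ile Q S3 by apply: ile_trans (ile_sub QS3) (ile_image ((0, k0), None) F3 S3).
have pickB : forall B, borelP B -> ~ I B -> exists g : K -> X,
    (forall k k', g k = g k' -> k = k') /\ forall k, B (g k) /\ ~ Q (g k).
  move=> B BB IB.
  pose D := [set [set q] | q in Q].
  have DI : D `<=` I by move=> _ [q _ <-].
  have DQ : ile D Q by apply: ile_image.
  have DR : D #<= [set: R] by apply: card_of_ile (ile_trans DQ (ile_trans QR S3R)).
  have nRD : ~ ([set: R] #<= D).
    by move/(ile_of_card set0) => RD; apply: S3small (ile_trans RD (ile_trans DQ QR)).
  have := Hbig B D BB IB DI DR nRD.
  move=> /card_eqPle [_ /(ile_of_card 0) RB].
  have [g [gB ginj]] := ile_trans KR RB.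
  exists g; split=> [k k'|k]; first by apply: ginj.
  have [Bg nDg] := gB k Logic.I; split=> // Qg; apply: nDg.
  by exists [set g k] => //; exists (g k).
have [[A [BA IA jA]]|nA] := pselect (exists A, [/\ borelP A, ~ I A & j (true, A) = a]).
  have [g [ginj gB]] := pickB A BA IA.
  exists g; split=> //.
  - by move=> k; case: (gB k).
  - move=> A' BA' IA' jA'.
    have -> : A' = A by apply: jB => //; rewrite jA jA'.
    by move=> k; case: (gB k).
  - by move=> E EK jEa; exfalso; apply: (jBE A E) => //; rewrite jA jEa.
have [[E [EK jEa]]|nE] := pselect (exists E, E #= [set: K] /\ j (false, E) = a).
  have KE : [set: K] #= E by rewrite card_eq_sym.
  have [phi [phi_E [phiinj phisurj]]] := bij_of_card 0 KE.
  have EK' : ile E [set: K] by case/card_eqPle: EK => /(ile_of_card k0).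
  pose D := [set [set p.1 - p.2] | p in Q `*` E].
  have DI : D `<=` I by move=> _ [q _ <-].
  have DQE : ile D (Q `*` E) by apply: (ile_image (0, 0)).
  have QEsmall : ~ ile [set: R] (S3 `*` [set: K]).
    exact: (small_prod ((0, k0), None) k0 nR S3small Ksmall).
  have QER : ile (S3 `*` [set: K]) [set: R].
    by apply: ile_trans (ileX S3R KR) (ile_trans _ RR); exists id; split.
  have DR : D #<= [set: R].
    by apply: card_of_ile (ile_trans DQE (ile_trans (ileX QR EK') QER)).
  have nRD : ~ ([set: R] #<= D).
    move/(ile_of_card set0) => RD; apply: QEsmall.
    exact: ile_trans RD (ile_trans DQE (ileX QR EK')).
  have := Hbig setT D BT IT DI DR nRD.
  move=> /card_eqPle [_ /(ile_of_card 0) [f [fT _]]].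
  have [_ nDt] := fT 0 Logic.I; set t := f 0 in nDt.
  exists (fun k => phi k + t); split.
  - by move=> k k' /addIr e; apply: phiinj.
  - move=> k Qk; apply: nDt.
    exists [set (phi k + t) - phi k]; last by rewrite /= addrC addKr.
    by exists (phi k + t, phi k) => //; split => //; apply: (phi_E k Logic.I).
  - by move=> A BA IA jAa; exfalso; apply: (jBE A E) => //; rewrite jAa jEa.
  - move=> E' E'K jE'a; have -> : E' = E by apply: jE => //; rewrite jE'a jEa.
    exists t; apply/seteqP; split.
      by move=> _ [k _ <-]; exists (phi k) => //; apply: (phi_E k Logic.I).
    by move=> _ [e Ee <-]; have [k _ <-] := phisurj e Ee; exists k.
have [g [ginj gB]] := pickB setT BT IT.
exists g; split=> //.
- by move=> k; case: (gB k).
- by move=> A BA IA jAa; exfalso; apply: nA; exists A.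
- by move=> E EK jEa; exfalso; apply: nE; exists E.
Qed.

End P_St.
Import P_St.

Module P_Co.
Set Implicit Arguments. Unset Strict Implicit. Unset Printing Implicit Defensive.
Import Order.TTheory GRing.Theory Num.Theory.
Local Open Scope classical_set_scope.
Local Open Scope ring_scope.
Import lra interval.

Inductive code := COpen (s : set nat) | CCompl (c : code) | CUnion (F : nat -> code).

Fixpoint interp (X : Type) (bas : nat -> set X) (c : code) : set X :=
  match c with
  | COpen s => \bigcup_(n in s) bas n
  | CCompl c' => ~` interp bas c'
  | CUnion F => \bigcup_n interp bas (F n)
  end.

Fixpoint tenc (c : code) (p : seq nat) : nat * set nat :=
  match c, p with
  | COpen s, [::] => (0%N, s)
  | COpen _, _ :: _ => (3%N, set0)
  | CCompl _, [::] => (1%N, set0)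
  | CCompl c', _ :: p' => tenc c' p'
  | CUnion _, [::] => (2%N, set0)
  | CUnion F, n :: p' => tenc (F n) p'
  end.

Lemma tenc_inj c c' : tenc c = tenc c' -> c = c'.
Proof.
elim: c c' => [s|c IH|F IH] [s'|c'|F'] e; have e0 := congr1 (fun f => f [::]) e;
  simpl in e0; try (by case: e0).
- by case: e0 => ->.
- congr CCompl; apply: IH; apply/funext => p.
  exact: (congr1 (fun f => f (0%N :: p)) e).
- congr CUnion; apply/funext => n; apply: IH; apply/funext => p.
  exact: (congr1 (fun f => f (n :: p)) e).
Qed.

Definition encS (T : seq nat -> nat * set nat) : set nat :=
  [set m | exists p b k, m = pickle (p, b, k) /\ (if b then (T p).2 k else (T p).1 = k)].

Lemma encS_half T T' : encS T = encS T' -> forall p,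
  (T p).1 = (T' p).1 /\ forall k, (T p).2 k -> (T' p).2 k.
Proof.
move=> e p; split.
  have : encS T (pickle (p, false, (T p).1)) by exists p, false, (T p).1.
  rewrite e => -[p' [b' [k' [/(pcan_inj pickleK_inv) ee hh]]]].
  by case: ee hh => <- <- <-.
move=> k Tk.
have : encS T (pickle (p, true, k)) by exists p, true, k.
rewrite e => -[p' [b' [k' [/(pcan_inj pickleK_inv) ee hh]]]].
by case: ee hh => <- <- <-.
Qed.

Lemma encS_inj T T' : encS T = encS T' -> T = T'.
Proof.
move=> e; apply/funext => p.
have [e1 s1] := encS_half e p; have [_ s2] := encS_half (esym e) p.
case: (T p) (T' p) e1 s1 s2 => [a A] [a' A'] /= -> s1 s2; congr pair.
by apply/seteqP; split=> k; [apply: s1|apply: s2].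
Qed.


Lemma borel_ile (R : realType) (X : zmodType) (d : X -> X -> R) :
  is_metric d -> d_separable d -> ile [set A | borel d A] [set: set nat].
Proof.
move=> [d0 [dsym dtri]] [D [cD dense]].
have [enc [_ encinj]] := ile_of_card 0%N cD.
pose bas n : set X := [set y | exists q (r : rat),
  [/\ D q, n = pickle (enc q, r) & d q y < ratr r]].
have open_code : forall U, d_open d U -> U = \bigcup_(n in [set n | bas n `<=` U]) bas n.
  move=> U oU; apply/seteqP; split; last by move=> y [n sub /sub].
  move=> y Uy; have [e [e0 ballU]] := oU y Uy.
  have e30 : 0 < e / 3 by lra.
  have [q [Dq dyq]] := dense y (e / 3) e30.
  have [r] := @rat_in_itvoo R (e / 3) (e * 2 / 3) ltac:(lra).
  rewrite in_itv /= => /andP [r1 r2].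
  exists (pickle (enc q, r)).
    move=> z [q' [r' [Dq' /(pcan_inj pickleK_inv) [/encinj eq er] dz]]].
    rewrite -(eq Dq Dq') -er in dz; apply: ballU => /=.
    have := dtri y q z; lra.
  by exists q, r; split => //; rewrite dsym; lra.
have bcode : forall A, borel d A -> exists c, interp bas c = A.
  move=> A; elim => [U oU|A' _ [c e]|F _ IH].
  - by exists (COpen [set n | bas n `<=` U]); rewrite /= -open_code.
  - by exists (CCompl c); rewrite /= e.
  - have [G HG] := ch IH; exists (CUnion G) => /=.
    by congr bigcup; apply/funext => n; rewrite HG.
have [cd Hcd] : exists cd : set X -> code, forall A, borel d A -> interp bas (cd A) = A.
  apply: (@ch _ _ (fun A c => borel d A -> interp bas c = A)) => A.
  have [bA|nbA] := pselect (borel d A); last by exists (COpen set0).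
  by have [c e] := bcode A bA; exists c.
exists (fun A => encS (tenc (cd A))); split=> // A A' bA bA' /encS_inj /tenc_inj e.
by rewrite -(Hcd A bA) -(Hcd A' bA') e.
Qed.

End P_Co.
Import P_Co.

Module P_Ec.
Set Implicit Arguments. Unset Strict Implicit. Unset Printing Implicit Defensive.
Import Order.TTheory GRing.Theory Num.Theory.
Local Open Scope classical_set_scope.
Local Open Scope ring_scope.
Local Open Scope card_scope.

Lemma ile_pow T U : ile [set: T] [set: U] -> ile [set: set T] [set: set U].
Proof.
move=> [f [_ finj]]; exists (fun S => f @` S); split=> // S S' _ _ e.
apply/seteqP; split=> x Sx.
  have : (f @` S') (f x) by rewrite -e; exists x.
  by move=> [x' S'x' /(finj _ _ Logic.I Logic.I) <-].
have : (f @` S) (f x) by rewrite e; exists x.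
by move=> [x' Sx' /(finj _ _ Logic.I Logic.I) <-].
Qed.

Lemma E_ile (X : zmodType) (K : Type) : ile [set: X] [set: set K] ->
  ile [set E : set X | E #= [set: K]] [set: set (K * K)].
Proof.
move=> [iota [_ iinj]].
have [phi Hphi] : exists phi : set X -> K -> X, forall E, E #= [set: K] ->
    (forall k, E (phi E k)) /\ (forall y, E y -> exists k, phi E k = y).
  apply: (@ch _ _ (fun E f => E #= [set: K] -> (forall k, E (f k)) /\
     (forall y, E y -> exists k, f k = y))) => E.
  have [EK|nEK] := pselect (E #= [set: K]); last by exists (fun _ => 0).
  have KE : [set: K] #= E by rewrite card_eq_sym.
  have [f [fE [_ fsurj]]] := bij_of_card 0 KE.
  exists f => _; split=> [k|y /fsurj [k _ <-]]; first exact: fE.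
  by exists k.
exists (fun E => [set p : K * K | iota (phi E p.1) p.2]); split=> // E E' EK E'K e.
have ephi : forall k, phi E k = phi E' k.
  move=> k; apply: iinj => //; apply/seteqP; split=> k' h.
    by have : [set p : K * K | iota (phi E p.1) p.2] (k, k') by [] ; rewrite e.
  by have : [set p : K * K | iota (phi E' p.1) p.2] (k, k') by []; rewrite -e.
have [EE EEs] := Hphi E EK; have [EE' EEs'] := Hphi E' E'K.
apply/seteqP; split=> y.
  by move=> /EEs [k <-]; rewrite ephi.
by move=> /EEs' [k <-]; rewrite -ephi.
Qed.

End P_Ec.
Import P_Ec.

Module P_Ma.
Set Implicit Arguments. Unset Strict Implicit. Unset Printing Implicit Defensive.
Import Order.TTheory GRing.Theory Num.Theory.
Local Open Scope classical_set_scope.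
Local Open Scope ring_scope.
Local Open Scope card_scope.

Lemma bigcup2 T (A B : set T) :
  \bigcup_n (fun n => if n is 0%N then A else B) n = A `|` B.
Proof.
apply/seteqP; split=> x.
  by move=> [[|n] _ h]; [left|right].
by move=> [h|h]; [exists 0%N|exists 1%N].
Qed.

Lemma borelU2 (R : realType) (X : zmodType) (d : X -> X -> R) A B :
  borel d A -> borel d B -> borel d (A `|` B).
Proof.
move=> bA bB; rewrite -bigcup2; apply: borel_cunion => -[|n] //.
Qed.

Lemma borelD (R : realType) (X : zmodType) (d : X -> X -> R) A B :
  borel d A -> borel d B -> borel d (A `\` B).
Proof.
move=> bA bB.
have -> : A `\` B = ~` (~` A `|` B).
  apply/seteqP; split=> x.
    by move=> [Ax nBx] [/(_ Ax)|/nBx].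
  move=> h; split; [apply: contrapT => hh; apply: h; left | move=> Bx; apply: h; right] => //.
by apply: borel_compl; apply: borelU2 => //; apply: borel_compl.
Qed.

Lemma borelT (R : realType) (X : zmodType) (d : X -> X -> R) : borel d [set: X].
Proof. by apply: borel_open => x _; exists 1; split. Qed.

Lemma idealU2 (X : zmodType) (I : set (set X)) A B : sigma_ideal I ->
  I A -> I B -> I (A `|` B).
Proof. by move=> [_ sI] IA IB; rewrite -bigcup2; apply: sI => -[|n]. Qed.

Lemma nat_ile_R (R : realType) : ile [set: nat] [set: R].
Proof.
exists (fun n => n%:R); split=> // m n _ _ /eqP.
by rewrite eqr_nat => /eqP.
Qed.

Lemma K_infinite (R : realType) (K : Type) :
  ile [set: R] [set: set K] -> ile [set: nat] [set: K].
Proof.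
move=> RK; apply: contrapT => nK.
have /finite_setP [n KI] := fin_of_nile nK.
have [be [beI [beinj _]]] := bij_of_card 0%N KI.
have SF : ile [set: set K] [set: {ffun 'I_n -> bool}].
  exists (fun S => [ffun i : 'I_n => `[< exists k, be k = i /\ S k >]]); split=> // S S' _ _ e.
  apply/seteqP; split=> k Sk.
  - have bk : (be k < n)%N by apply: beI.
    have := congr1 (fun f : {ffun 'I_n -> bool} => f (Ordinal bk)) e; rewrite !ffunE /=.
    have -> : `[< exists k0, be k0 = be k /\ S k0 >] = true by apply/asboolP; exists k.
    move/esym/asboolP => [k' [/beinj ek S'k']].
    by rewrite -(ek Logic.I Logic.I).
  - have bk : (be k < n)%N by apply: beI.
    have := congr1 (fun f : {ffun 'I_n -> bool} => f (Ordinal bk)) e; rewrite !ffunE /=.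
    have -> : `[< exists k0, be k0 = be k /\ S' k0 >] = true by apply/asboolP; exists k.
    move/asboolP => [k' [/beinj ek S'k']].
    by rewrite -(ek Logic.I Logic.I).
have fR := card_le_finite (card_of_ile (ile_trans RK SF)) finite_finset.
exact: nile_of_fin fR (nat_ile_R R).
Qed.

End P_Ma.
Import P_Ma.

Import Order.TTheory GRing.Theory Num.Theory.
Local Open Scope classical_set_scope.
Local Open Scope ring_scope.
Local Open Scope card_scope.

Theorem mainTheorem11 (R : realType) (X : zmodType) (d : X -> X -> R)
  (I : set (set X)) (K : Type) :
  abelian_polish_group_complete_metric d ->
  ~ countable [set: X] ->
  sigma_ideal I -> ideal_is_proper I -> translation_invariant I ->
  contains_singletons I -> has_borel_base (borel d) I ->
  (forall B : set X, borel d B -> ~ I B ->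
     forall D : set (set X), D `<=` I ->
       D #<= [set: R] -> ~ ([set: R] #<= D) ->
       (B `\` \bigcup_(A in D) A) #= [set: R]) ->
  (exists a : R, (exists x y, d x y = a) /\ a <> 0 /\
     forall x, I [set y | d x y = a]) ->
  [set: set K] #= [set: R] ->
  exists B : K -> set X,
    (forall i j, i <> j -> B i `&` B j = set0) /\
    (forall i, completely_nonmeasurable (borel d) I (B i)) /\
    (forall i, ~ two_covering (B i)) /\
    kappa_S_covering K (range B).
Proof.
move=> [Hmet [_ [dsep _]]] Hunc HsI Hprop _ Hsing Hbase Hbig _ HK.
have BT := borelT d.
have nR := nat_ile_R R.
have RR := hess nR.
have [SKR RSK] : ile [set: set K] [set: R] /\ ile [set: R] [set: set K].
  by case/card_eqPle: HK => /(ile_of_card 0) ? /(ile_of_card set0) ?.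
have nK := K_infinite RSK.
have [k0 [k1 k01]] : exists k0 k1 : K, k0 <> k1.
  have [f [_ finj]] := nK; exists (f 0%N), (f 1%N).
  by move/(finj _ _ Logic.I Logic.I).
have KR : ile [set: K] [set: R].
  apply: ile_trans SKR; exists (fun k => [set k]); split=> // x y _ _ e.
  by have : [set x] x by []; rewrite e.
have Ksmall : ~ ile [set: R] [set: K] by move=> RK; apply: (@cantor K setT); apply: ile_trans SKR RK.
have XR : [set: X] #= [set: R].
  have := Hbig setT BT Hprop set0 (sub0set _) (card_ge0 _ _).
  rewrite bigcup_set0 setD0; apply.
  by move/(ile_of_card set0) => [f [fT _]]; exact: fT 0 Logic.I.
have XSK : ile [set: X] [set: set K].
  by apply: ile_trans RSK; case/card_eqPle: XR => /(ile_of_card 0).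
have KK : ile [set: K * K] [set: K].
  by apply: ile_trans (hess nK); apply: ile_sub => p.
have [fB [_ fBinj]] : ile [set A | borel d A] [set: R].
  exact: ile_trans (borel_ile Hmet dsep) (ile_trans (ile_pow nK) SKR).
have [fE [_ fEinj]] : ile [set E : set X | E #= [set: K]] [set: R].
  exact: ile_trans (E_ile XSK) (ile_trans (ile_pow KK) SKR).
have [pr [_ prinj]] := RR.
pose j0 (tau : bool * set X) : R :=
  pr (if tau.1 then 1 else 0, if tau.1 then fB tau.2 else fE tau.2).
have [r [rrefl ranti rtr rtot rmin]] := wo_exists R.
pose lt x y := r x y /\ x <> y.
have ltirr : forall x, ~ lt x x by move=> x [].
have lttr : forall x y z, lt x y -> lt y z -> lt x z.
  move=> x y z [xy nxy] [yz nyz]; split; first exact: rtr xy yz.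
  by move=> exz; rewrite exz in xy; apply: nyz; apply: ranti.
have lttri : forall x y, lt x y \/ x = y \/ lt y x.
  move=> x y; have [->|nxy] := pselect (x = y); first by right; left.
  case: (rtot x y) => h; [left|right; right]; split => //; exact: nesym.
have ltwf : forall S : set R, S !=set0 -> exists z, S z /\ forall x, S x -> ~ lt x z.
  move=> S /rmin [z [Sz zmin]]; exists z; split=> // x Sx [xz nxz].
  by apply: nxz; apply: ranti => //; apply: zmin.
pose W := [set a | ~ ile [set: R] [set b | lt b a]].
have Wd : forall a b, W a -> lt b a -> W b.
  move=> a b Wa ba RB; apply: Wa; apply: ile_trans RB (ile_sub _).
  by move=> c /= cb; apply: lttr cb ba.
have [w [wW winj]] : ile [set: R] W.
  have [[a0 na0]|allW] := pselect (exists a, ~ W a); last first.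
    apply: ile_sub => a _; apply: contrapT => na; apply: allW; by exists a.
  have [a [na amin]] := ltwf [set a | ~ W a] (ex_intro _ a0 na0).
  have Ra : ile [set: R] [set b | lt b a] by apply: contrapT.
  apply: ile_trans Ra (ile_sub _) => b ba; apply: contrapT => nb.
  exact: amin b nb ba.
pose J tau := w (j0 tau).
have J1 : forall A A', borel d A -> borel d A' -> J (true, A) = J (true, A') -> A = A'.
  move=> A A' bA bA' /(winj _ _ Logic.I Logic.I) /(prinj _ _ (conj Logic.I Logic.I) (conj Logic.I Logic.I)) [].
  exact: fBinj.
have J2 : forall E E', E #= [set: K] -> E' #= [set: K] -> J (false, E) = J (false, E') -> E = E'.
  move=> E E' hE hE' /(winj _ _ Logic.I Logic.I) /(prinj _ _ (conj Logic.I Logic.I) (conj Logic.I Logic.I)) [].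
  exact: fEinj.
have J3 : forall A E, borel d A -> ~ I A -> E #= [set: K] -> J (true, A) <> J (false, E).
  move=> A E _ _ _ /(winj _ _ Logic.I Logic.I) /(prinj _ _ (conj Logic.I Logic.I) (conj Logic.I Logic.I)) [] /eqP.
  by rewrite oner_eq0.
have [h h0] : exists h : X, h <> 0.
  apply: contrapT => nh; apply: Hunc.
  have -> : [set: X] = [set 0].
    apply/seteqP; split=> x // _; apply: contrapT => nx; apply: nh; by exists x.
  exact: countable1.
have ext : forall a (H : set (R * (K -> X))), W a -> functional H ->
    gdom H = [set b | lt b a] ->
    (forall b v, H (b, v) -> stepP (borel d) I J h b (hist lt H b) v) ->
    exists v, stepP (borel d) I J h a H v.
  move=> a H Wa Hf domH _.
  have [hv Hhv] : exists hv : R -> K -> X, forall b, gdom H b -> H (b, hv b).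
    apply: (@ch _ _ (fun b v => gdom H b -> H (b, v))) => b.
    have [[v Hv]|nb] := pselect (gdom H b); first by exists v.
    by exists (fun _ => 0).
  apply: (@step_exists R X K (borel d) I J h a H k0 _ Hsing BT Hprop nR KR Ksmall J3 _ J2
    ([set b | lt b a] `*` [set: K]) (fun p => hv p.1 p.2)).
  - by move=> B D bB IB; exact: Hbig B bB IB D.
  - by move=> A A' bA _ bA' _; exact: J1.
  - move=> x [[b v] [Hbv [k ->]]].
    have db : gdom H b by exists v.
    exists (b, k); first by split=> //; move: db; rewrite domH.
    by rewrite /= (Hf _ _ _ (Hhv b db) Hbv).
  - exact: (small_prod 0 k0 nR Wa Ksmall).
  - by apply: ile_trans (ileX (ile_sub (@subsetT _ _)) KR) RR.
have [G [Gf GW Gs]] := transfinite (step := stepP (borel d) I J h) ltirr lttr lttri ltwf Wd ext.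
pose B (k : K) := [set x | exists p, G p /\ x = p.2 k].
have uniq : forall a g b g' k k', G (a, g) -> G (b, g') -> g k = g' k' -> a = b /\ k = k'.
  move=> a g b g' k k' Ga Gb e.
  case: (lttri a b) => [ab|[eab|ba]].
  - exfalso; have [_ nQ _ _] := Gs _ _ Gb; apply: (nQ k'); left.
    by exists (a, g); split; [split|exists k; rewrite /= e].
  - subst b; have eg := Gf _ _ _ Ga Gb; subst g'.
    by have [ginj _ _ _] := Gs _ _ Gb; split=> //; exact: ginj e.
  - exfalso; have [_ nQ _ _] := Gs _ _ Ga; apply: (nQ k); left.
    by exists (b, g'); split; [split|exists k'; rewrite /= e].
have shift : forall a g b g' k, G (a, g) -> G (b, g') -> g' k = h + g k -> False.
  move=> a g b g' k Ga Gb e.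
  case: (lttri a b) => [ab|[eab|ba]].
  - have [_ nQ _ _] := Gs _ _ Gb; apply: (nQ k); right; left.
    by exists (a, g); split; [split|exists k; rewrite /= e addrC addKr].
  - subst b; have eg := Gf _ _ _ Ga Gb; subst g'.
    apply: h0; apply: (@addIr _ (g k)); by rewrite add0r -e.
  - have [_ nQ _ _] := Gs _ _ Ga; apply: (nQ k); right; right.
    by exists (b, g'); split; [split|exists k; rewrite /= e addrC].
have Bne : forall k, exists x, B k x.
  move=> k; have : gdom G (w 0) by rewrite GW; apply: wW.
  by move=> [g Gg]; exists (g k); exists (w 0, g).
have disj : forall i j, i <> j -> B i `&` B j = set0.
  move=> i j ij; apply/seteqP; split=> // x [[[a g] [Ga ->]] [[b g'] [Gb e]]].
  by exfalso; apply: ij; exact: (uniq _ _ _ _ _ _ Ga Gb e).2.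
have meet : forall A, borel d A -> ~ I A -> forall k, exists x, A x /\ B k x.
  move=> A bA IA k; have : gdom G (J (true, A)) by rewrite GW; apply: wW.
  move=> [g Gg]; have [_ _ hB _] := Gs _ _ Gg.
  by exists (g k); split; [exact: hB A bA IA erefl k|exists (J (true, A), g)].
have nIAC : forall A C, borel d A -> ~ I A -> I C -> ~ I (A `\` C).
  move=> A C bA IA IC IAC; apply: IA; apply: HsI.1 (idealU2 HsI IAC IC) _ => x Ax.
  by have [Cx|nCx] := pselect (C x); [right|left].
exists B; split; [|split; [|split]].
- exact: disj.
- move=> k A bA IA; split.
  + move=> IAB; have [C [bC [IC sC]]] := Hbase _ IAB.
    have [x [[Ax nCx] Bx]] := meet _ (borelD bA bC) (nIAC A C bA IA IC) k.
    by apply: nCx; apply: sC.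
  + move=> IAB; have [C [bC [IC sC]]] := Hbase _ IAB.
    pose k' := if pselect (k = k0) then k1 else k0.
    have kk' : k' <> k.
      rewrite /k'; case: pselect => [ek|nk] /=; [rewrite ek; exact: nesym k01 | exact: nesym nk].
    have [x [[Ax nCx] Bx]] := meet _ (borelD bA bC) (nIAC A C bA IA IC) k'.
    apply: nCx; apply: sC; split=> // Bkx.
    by have := disj k' k kk'; move/seteqP => [/(_ x (conj Bx Bkx))].
- move=> k tc.
  have C2 : [set 0; h] #= [set: bool].
    apply: card_of_ile2.
      exists (fun x => x == h); split=> // x y Cx Cy.
      move: Cx Cy; rewrite /setU /set1 /= => -[] -> -[] -> //; rewrite eqxx.
        by move/eqP/esym.
      by move/esym/eqP.
    exists (fun b : bool => if b then h else 0); split.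
      by move=> [] _; rewrite /setU /set1 /=; [right|left].
    by move=> [] [] _ _ //= e; exfalso; apply: h0; rewrite e.
  have [x sub] := tc _ C2.
  have [[a g] [Ga e1]] := sub (0 + x) (ex_intro2 _ _ 0 (or_introl erefl) erefl).
  have [[b g'] [Gb e2]] := sub (h + x) (ex_intro2 _ _ h (or_intror erefl) erefl).
  apply: (shift a g b g' k Ga Gb); rewrite /= in e1 e2.
  by rewrite -e2 -e1 add0r.
- split; [|split].
  + move=> _ _ [i _ <-] [j _ <-] ne; apply: disj => eij; apply: ne; by rewrite eij.
  + apply: card_of_ile2.
      have [f Hf] : exists f : set X -> K, forall S, range B S -> B (f S) = S.
        apply: (@ch _ _ (fun S k => range B S -> B k = S)) => S.
        have [[k _ <-]|nS] := pselect (range B S); first by exists k.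
        by exists k0.
      exists f; split=> // S S' hS hS' e.
      by rewrite -(Hf S hS) -(Hf S' hS') e.
    exists B; split=> [k _|i j _ _ e]; first by exists k.
    apply: contrapT => ij; have [x Bx] := Bne i.
    have := disj i j ij; rewrite -e setIid => E; by rewrite E in Bx.
  + move=> E EK; have : gdom G (J (false, E)) by rewrite GW; apply: wW.
    move=> [g Gg]; have [_ _ _ hE] := Gs _ _ Gg.
    have [t et] := hE E EK erefl.
    exists t; split.
      move=> y; rewrite -et => -[k _ <-]; exists (B k); first by exists k.
      by exists (J (false, E), g).
    move=> _ [k _ <-]; exists (g k); apply/seteqP; split=> y.
      move=> [Ety [[b g'] [Gb ey]]]; move: Ety; rewrite -et => -[k' _ ek'].
      rewrite /= in ey.
      have := uniq _ _ _ _ k' k Gg Gb; rewrite ek' -ey => /(_ erefl) [_ ek].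
      by rewrite -ek' ek.
    move=> ->; split; first by rewrite -et; exists k.
    by exists (J (false, E), g).
Qed.
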